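(* Let $j\ge 1$, $\lambda\ge 1$, $s\ge 0$ be integers and let $w=w_{j,s,\lambda}$ be the leaf weight sequence defined in the context. Then for every integer $n>3+2s+\lambda j$ we have $1\le n-s-w(n-j)<n$ and \[ w(n)=w\bigl(n-s-w(n-j)\bigr)+\lambda j . \]
   Context: Fix integers $j\ge1$, $\lambda\ge1$, $s\ge0$. Define a labeled infinite rooted tree $\mathcal K$ as follows. It has ''supernodes'' $S_0,S_1,S_2,\dots$ with an edge between $S_i$ and $S_{i+1}$ for every $i\ge0$ ($S_0$ is the root). $S_0$ has two further children: the ''initial leaf'' and a node $N_0$, which is a leaf. For each $i\ge1$, $S_i$ has a child $N_i$ (the ''knot node''), and attached to $N_i$ are $\lambda$ chains, each a path of $i\cdot j$ nodes hanging from $N_i$; the last (bottom) node of each chain is a leaf. Each supernode carries $s$ labels and every other node carries exactly one label. The labels are the consecutive positive integers $1,2,3,\dots$, assigned in the following order: initial leaf, $S_0$, $N_0$; then for $i=1,2,3,\dots$: $S_i$ (its $s$ labels), $N_i$, then the nodes of the first chain of $N_i$ from top to bottom, then the second chain, ..., then the $\lambda$-th chain. The initial leaf has weight $1$; every other leaf of $\mathcal K$ (namely $N_0$ and the bottom node of each chain) has weight $j$. The leaf weight sequence $w(n)=w_{j,s,\lambda}(n)$ ($n\ge1$) is the total weight of the leaves of $\mathcal K$ whose label is $\le n$. Explicitly, $w(n)=1+j\cdot\#\{\ell\in L:\ell\le n\}$, where $L$ consists of the number $s+2$ together with the numbers $L_{i,c}=s+2+\sum_{l=1}^{i-1}(s+1+\lambda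 l j)+s+1+c\,i\,j$ for $i\ge1$, $1\le c\le\lambda$. *)

(* Defs.v *)
From mathcomp Require Import all_boot all_order all_algebra.
Set Implicit Arguments. Unset Strict Implicit. Unset Printing Implicit Defensive.

Definition Lic (j s lam i c : nat) : nat :=
  s + 2 + (\sum_(1 <= l < i) (s + 1 + lam * l * j)) + s + 1 + c * i * j.

(* L = {s+2} U {L_{i,c} : i>=1, 1<=c<=lam}.
   Since L_{i,c} >= i, only i <= n can contribute; the L_{i,c} are pairwise
   distinct (strictly increasing in (i,c) lexicographically) and all > s+2,
   so counting index pairs counts elements of L. *)
Definition cntL (j s lam n : nat) : nat :=
  (s + 2 <= n) +
  \sum_(1 <= i < n.+1) \sum_(1 <= c < lam.+1) (Lic j s lam i c <= n).

Definition w (j s lam n : nat) : nat := 1 + j * cntL j s lam n.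

(* Main.v *)
Require Import Defs.
From mathcomp Require Import all_boot all_order all_algebra.
From mathcomp Require Import zify.
Import Order.TTheory GRing.Theory Num.Theory.

Definition Bk (j s lam l : nat) := s + 1 + lam * l * j.
Definition Qk (j s lam i : nat) := s + 2 + \sum_(1 <= l < i) Bk j s lam l.
Definition cin (j s lam i u : nat) := \sum_(1 <= c < lam.+1) (s + 1 + c * i * j <= u).

Lemma QS j s lam i : 1 <= i -> Qk j s lam i.+1 = Qk j s lam i + Bk j s lam i.
Proof. move=> hi; by rewrite /Qk big_nat_recr //= addnA. Qed.

Lemma Q_mono j s lam i d : 1 <= i -> Qk j s lam i <= Qk j s lam (i + d).
Proof.
move=> hi; elim: d => [|d IH]; first by rewrite addn0.
rewrite addnS QS; last by lia.
by apply: leq_trans IH _; apply: leq_addr.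
Qed.

Lemma Q_mono' j s lam a b : 1 <= a -> a <= b -> Qk j s lam a <= Qk j s lam b.
Proof. move=> ha hab; rewrite -(subnKC hab); exact: Q_mono. Qed.

Lemma Q_ge j s lam i : 1 <= i -> i + s + 1 <= Qk j s lam i.
Proof.
elim: i => [//|[|i] IH] _.
  by rewrite /Qk big_geq //; lia.
rewrite QS //; have := IH isT; rewrite /Bk; lia.
Qed.

Lemma LicE j s lam i c : Lic j s lam i c = Qk j s lam i + (s + 1 + c * i * j).
Proof. rewrite /Lic /Qk /Bk; lia. Qed.

Lemma sum_le q lam : \sum_(1 <= c < lam.+1) (c <= q) = minn lam q.
Proof.
elim: lam => [|lam IH]; first by rewrite big_geq //; lia.
rewrite big_nat_recr //= IH; case: leqP => H; lia.
Qed.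

Lemma cntA j s lam i u : 1 <= i -> u <= Bk j s lam i ->
  cntL j s lam (Qk j s lam i + u) = 1 + lam * (i - 1) + cin j s lam i u.
Proof.
move=> hi hu; rewrite /cntL.
have hQ := Q_ge j s lam i hi.
have -> : (s + 2 <= Qk j s lam i + u) = true by apply/idP; lia.
rewrite (big_cat_nat (n:=i)) //=; last by lia.
rewrite (big_cat_nat (m:=i) (n:=i.+1)) //=; last by lia.
rewrite big_nat1.
have -> : \sum_(1 <= i' < i) \sum_(1 <= c < lam.+1) (Lic j s lam i' c <= Qk j s lam i + u)
   = \sum_(1 <= i' < i) lam.
  apply: eq_big_nat => i' /andP [h1 h2].
  rewrite (eq_big_nat _ _ (F2 := fun c => ((c <= lam) : nat))); first by rewrite sum_le minnn.
  move=> c /andP [c1 c2]; rewrite LicE.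
  have hm : c * i' * j <= lam * i' * j by apply: leq_mul => //; apply: leq_mul.
  have hq : Qk j s lam i'.+1 <= Qk j s lam i by apply: Q_mono'.
  rewrite QS // /Bk in hq.
  congr (nat_of_bool _); apply/idP/idP => _; lia.
have -> : \sum_(i.+1 <= i' < (Qk j s lam i + u).+1) \sum_(1 <= c < lam.+1) (Lic j s lam i' c <= Qk j s lam i + u)
   = \sum_(i.+1 <= i' < (Qk j s lam i + u).+1) 0.
  apply: eq_big_nat => i' /andP [h1 h2].
  rewrite (eq_big_nat _ _ (F2 := fun c => 0)); first by rewrite sum_nat_const_nat muln0.
  move=> c /andP [c1 c2]; rewrite LicE.
  have hq : Qk j s lam i.+1 <= Qk j s lam i' by apply: Q_mono'.
  rewrite QS // /Bk in hq.
  rewrite /Bk in hu.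
  by apply/eqP; rewrite eqb0; apply/negP; lia.
have -> : \sum_(1 <= c < lam.+1) (Lic j s lam i c <= Qk j s lam i + u) = cin j s lam i u.
  apply: eq_big_nat => c _; rewrite LicE; by rewrite leq_add2l.
rewrite !sum_nat_const_nat muln0; lia.
Qed.

Lemma cnt_thr (P : nat -> bool) lam :
  (forall c c', c <= c' -> P c' -> P c) ->
  \sum_(1 <= c < lam.+1) P c <= lam /\
  (forall c, 1 <= c <= lam -> P c = (c <= \sum_(1 <= c < lam.+1) P c)).
Proof.
move=> Pmono; elim: lam => [|lam [IH1 IH2]].
  by rewrite big_geq //; split => // c; lia.
rewrite big_nat_recr //=.
case Hl: (P lam.+1) => /=.
  have HS : \sum_(1 <= c < lam.+1) P c = lam.
    case: lam Hl IH1 IH2 => [|l] Hl IH1 IH2; first lia.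
    have H := IH2 l.+1; rewrite (Pmono l.+1 l.+2) // in H.
    have := H (leqnn _); lia.
  rewrite HS; split; first lia.
  move=> c hc; rewrite (Pmono c lam.+1) //; lia.
split; first lia.
move=> c /andP [c1 c2]; rewrite leq_eqVlt in c2; case/orP: c2 => [/eqP ->|c2].
  rewrite Hl; lia.
rewrite addn0; apply: IH2; lia.
Qed.

Lemma block j s lam n : Qk j s lam 2 < n ->
  exists p t, [/\ 1 <= p, 1 <= t, t <= Bk j s lam p.+1 & n = Qk j s lam p.+1 + t].
Proof.
move=> hn.
have ex : exists i, (fun i => Qk j s lam i.+1 < n) i by exists 1.
have bnd : forall i, (fun i => Qk j s lam i.+1 < n) i -> i <= n.
  move=> i /= hi; have := Q_ge j s lam i.+1 isT; lia.
case: (ex_maxnP ex bnd) => p /= Hp Hmax.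
have p1 : 1 <= p by apply: Hmax.
have Hn : n <= Qk j s lam p.+2.
  case: leqP => // H; have := Hmax p.+1 H; lia.
rewrite QS // in Hn.
exists p, (n - Qk j s lam p.+1); split => //; lia.
Qed.


Lemma key j lam s n : 1 <= j -> 1 <= lam -> 3 + 2 * s + lam * j < n ->
  exists M, [/\ w j s lam (n - j) + s + M = n, 1 <= M, M < n &
                w j s lam n = w j s lam M + lam * j].
Proof.
move=> hj hl hn.
case: (block j s lam n) => [|p [t [p1 t1 tB En]]].
  by rewrite QS // /Qk big_geq // /Bk; lia.
case: p p1 tB En => [//|p] _ tB En.
have Q2 := QS j s lam p.+2 isT.
have Q1 := Q_ge j s lam p.+1 isT.
have Q3 := QS j s lam p.+1 isT.
rewrite /Bk in tB Q2 Q3.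
rewrite /w.
case: (leqP j t) => jt.
- pose k := cin j s lam p.+2 (t - j).
  have [hk1 hk2] : k <= lam /\ (forall c, 1 <= c <= lam -> (s + 1 + c * p.+2 * j <= t - j) = (c <= k)).
    apply: (cnt_thr (fun c => s + 1 + c * p.+2 * j <= t - j)) => c c' hc /= H.
    apply: leq_trans H; rewrite leq_add2l; apply: leq_mul => //; exact: leq_mul.
  have hkt : j * (k + 1) <= t.
    case: (posnP k) => [->|kp]; first lia.
    have H : s + 1 + k * p.+2 * j <= t - j by rewrite hk2 // kp hk1.
    lia.
  pose t' := t - j * (k + 1).
  have ht' : t' <= Bk j s lam p.+1.
    rewrite /t' /Bk; case: (ltngtP k lam) => hkl; last (by rewrite hkl; lia); last lia.
    have H : ~~ (s + 1 + k.+1 * p.+2 * j <= t - j) by rewrite hk2 ?ltnn // hkl.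
    case: (ltngtP k.+1 lam) => hkl2; last (by rewrite -hkl2 in tB; lia); last lia.
    have hm : k.+2 * p.+1 * j <= lam * p.+1 * j by apply: leq_mul => //; apply: leq_mul.
    lia.
  exists (Qk j s lam p.+1 + t').
  have E1 : n - j = Qk j s lam p.+2 + (t - j) by lia.
  rewrite E1 En !cntA //; last by rewrite /Bk; lia.
  have -> : cin j s lam p.+1 t' = cin j s lam p.+2 t.
    apply: eq_big_nat => c /andP [c1 c2]; congr (nat_of_bool _).
    rewrite /t'; clearbody t' k.
    case: (ltngtP c k.+1) => hck.
    + have H : s + 1 + k * p.+2 * j <= t - j by rewrite hk2 //; apply/andP; split; lia.
      have hm : c * p.+1 * j <= k * p.+1 * j by apply: leq_mul => //; apply: leq_mul.
      have hm2 : c * j <= k * j by apply: leq_mul.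
      apply/idP/idP => _; lia.
    + have H : ~~ (s + 1 + k.+1 * p.+2 * j <= t - j).
        rewrite hk2 ?ltnn //; apply/andP; split; lia.
      have hm : k.+2 * p.+1 * j <= c * p.+1 * j by apply: leq_mul => //; apply: leq_mul.
      have hm2 : k.+2 * p.+2 * j <= c * p.+2 * j by apply: leq_mul => //; apply: leq_mul.
      apply/idP/idP => H'; lia.
    + rewrite hck; apply/idP/idP => H'; lia.
  rewrite /Bk in ht'; rewrite /t' -/k !subSS !subn0; clearbody k; split; lia.
- have hlj : j <= lam * j by rewrite leq_pmull.
  have E1 : n - j = Qk j s lam p.+1 + (Bk j s lam p.+1 + t - j) by rewrite /Bk; lia.
  exists (Qk j s lam p.+1 + t).
  rewrite E1 En !cntA //; try (rewrite /Bk; lia).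
  have [l hlam] : exists l, lam = l.+1 by case: (lam) hl => // l _; exists l.
  subst lam.
  have -> : cin j s l.+1 p.+1 (Bk j s l.+1 p.+1 + t - j) = l.
    rewrite /cin (eq_big_nat _ _ (F2 := fun c => ((c <= l) : nat))); first by rewrite sum_le; lia.
    move=> c /andP [c1 c2]; congr (nat_of_bool _); rewrite /Bk.
    case: (leqP c l) => hc.
    + have hm : c.+1 * p.+1 * j <= l.+1 * p.+1 * j by apply: leq_mul => //; apply: leq_mul.
      lia.
    + have -> : c = l.+1 by lia.
      apply/negP; lia.
  have -> : cin j s l.+1 p.+1 t = cin j s l.+1 p.+2 t.
    apply: eq_big_nat => c /andP [c1 c2]; congr (nat_of_bool _).
    have hcj : j <= c * j by rewrite leq_pmull.
    have -> : (s + 1 + c * p.+1 * j <= t) = false by apply/negP; lia.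
    by symmetry; apply/negP; lia.
  split; lia.
Qed.

Local Open Scope ring_scope.

Theorem mainTheorem1 (j lam s n : nat) :
  (1 <= j)%N -> (1 <= lam)%N -> (3 + 2 * s + lam * j < n)%N ->
  let m : int := n%:Z - s%:Z - (w j s lam (n - j))%:Z in
  (1 <= m) /\ (m < n%:Z) /\
  (w j s lam n)%:Z = (w j s lam `|m|%N)%:Z + (lam * j)%:Z.
Proof.
move=> hj hl hn.
have [M [HE HM1 HMn HW]] := @key j lam s n hj hl hn.
cbv zeta.
have -> : n%:Z - s%:Z - (w j s lam (n - j))%:Z = M%:Z.
  have HEz : n%:Z = (w j s lam (n - j))%:Z + s%:Z + M%:Z by rewrite -!PoszD HE.
  rewrite HEz; lia.
rewrite absz_nat HW PoszD.
split; first lia.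
split; first lia.
by [].
Qed.
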